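(* Let $m,n\ge 1$. Under optimal play, the Sign Game on the complete bipartite graph $K_{m,n}$ is won by Player 2 when both $m$ and $n$ are odd, and results in a draw when at least one of $m,n$ is even.
   Context: The Sign Game on a finite simple undirected graph $G$: two players, Player P and Player N, alternate turns; the player who moves first is called Player 1 and the other Player 2 (either of P, N may be Player 1). On a turn, a player chooses a vertex of $G$ not yet assigned a value and assigns it $+1$ or $-1$. The game ends when every vertex has been assigned. The score of an edge $uv$ is the product of the values of $u$ and $v$, and the score $s(G)$ of the game is the sum of the scores of all edges. Player P wins if $s(G)>0$, Player N wins if $s(G)<0$, and the game is a draw if $s(G)=0$. ''Under optimal play'' means both players play optimally, each with primary goal of winning and secondary goal of at least drawing; the result is the outcome of this finite perfect-information game under such play. $K_{m,n}$ is the complete bipartite graph with parts of sizes $m$ and $n$, every vertex of one part adjacent to every vertex of the other and no other edges. *)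

(* Defs.v *)
From mathcomp Require Import all_boot all_order all_algebra.
Set Implicit Arguments. Unset Strict Implicit. Unset Printing Implicit Defensive.
Import Order.TTheory GRing.Theory Num.Theory.
Local Open Scope ring_scope.

(* A finite simple graph: vertex type T : finType, adjacency e : rel T
   (assumed symmetric and irreflexive). *)

Section SignGame.
Variables (T : finType) (e : rel T).

Definition edges : {set {set T}} := [set [set u; v] | u in T, v in T & e u v].

Definition assignment := {ffun T -> option bool}.

Definition spin (o : option bool) : int :=
  match o with Some true => 1 | Some false => -1 | None => 0 end.

Definition score (s : assignment) : int :=
  \sum_(E in edges) \prod_(x in E) spin (s x).

Definition empty_assignment : assignment := [ffun _ => None].

Definition assign (s : assignment) (v : T) (b : bool) : assignment :=
  [ffun x => if x == v then Some b else s x].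

(* Minimax value of the game from state s, with the outcome encoded as
   +1 (P wins), 0 (draw), -1 (N wins), i.e. Num.sg of the final score.
   P maximizes, N minimizes (win > draw > loss, which is exactly the
   primary/secondary goals of the paper).  [pturn] is true iff P is to move.
   k is fuel; #|T| suffices. *)
Fixpoint value (k : nat) (s : assignment) (pturn : bool) : int :=
  match k with
  | 0%N => Num.sg (score s)
  | k'.+1 =>
    if [exists v, s v == None] then
      if pturn then
        \big[Num.max/-1]_(v | s v == None) \big[Num.max/-1]_(b : bool)
           value k' (assign s v b) false
      else
        \big[Num.min/1]_(v | s v == None) \big[Num.min/1]_(b : bool)
           value k' (assign s v b) true
    else Num.sg (score s)
  end.

(* Outcome under optimal play, starting from the empty assignment;
   [P_first] is true iff Player P is Player 1. *)
Definition sign_game_outcome (P_first : bool) : int :=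
  value #|T| empty_assignment P_first.

End SignGame.

Definition Kmn_adj (m n : nat) : rel ('I_m + 'I_n)%type :=
  fun x y => match x, y with
             | inl _, inr _ | inr _, inl _ => true
             | _, _ => false
             end.
Arguments Kmn_adj m n : clear implicits.
Arguments sign_game_outcome {T} e P_first.

(* Main.v *)
Require Import Defs.
From mathcomp Require Import all_boot all_order all_algebra zify.
Import Order.TTheory GRing.Theory Num.Theory.
Local Open Scope ring_scope.

Definition sgn (b : bool) : int := if b then 1 else -1.

Section Abs.
Variables (P : int -> nat -> int -> nat -> Prop) (goal : int -> Prop).
Definition AMG a ra b rb := (ra = 0%N /\ rb = 0%N /\ goal (a * b)) \/
  ((0 < ra)%N /\ exists t, P (a + sgn t) ra.-1 b rb) \/
  ((0 < rb)%N /\ exists t, P a ra (b + sgn t) rb.-1).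
End Abs.

Definition Oinv (sg : bool) (a : int) (ra : nat) (b : int) (rb : nat) : Prop :=
  (a = 0 /\ b = 0 /\ (ra %% 2 = 1)%N /\ (rb %% 2 = 1)%N) \/
  exists ep, a = sgn ep /\ b = sgn sg * sgn ep /\ (ra %% 2 = 0)%N /\ (rb %% 2 = 0)%N.

Definition Winv (sg : bool) (a : int) (ra : nat) (b : int) (rb : nat) : Prop :=
  (exists ep, 0 <= sgn ep * a /\ 0 <= sgn sg * sgn ep * b /\
     (((ra %% 2 = 0)%N /\ (rb %% 2 = 0)%N) \/
      ((ra %% 2 = 1)%N /\ (rb %% 2 = 0)%N /\ 1 <= sgn ep * a) \/
      ((ra %% 2 = 0)%N /\ (rb %% 2 = 1)%N /\ 1 <= sgn sg * sgn ep * b))) \/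
  (a = 0 /\ b = 0 /\ ~ ((ra %% 2 = 1)%N /\ (rb %% 2 = 1)%N)).

Definition Ogoal sg (x : int) := x = sgn sg.
Definition Wgoal sg (x : int) := 0 <= sgn sg * x.

Ltac solveO := first [ left; lia | right; exists true; lia | right; exists false; lia ].
Ltac solveW := first [ right; lia | left; exists true; lia | left; exists false; lia ].
Ltac solveAMG tac :=
  first [ left; split; [lia | split; [lia | nia]]
        | right; left; split; [lia | first [exists true; tac | exists false; tac]]
        | right; right; split; [lia | first [exists true; tac | exists false; tac]] ].

Ltac prep := unfold sgn in *;
  repeat match goal with
  | H : exists _, _ |- _ => destruct H
  | H : _ /\ _ |- _ => destruct H
  | H : _ \/ _ |- _ => destruct H
  | b : bool |- _ => destruct b
  end.

Lemma O_end sg a b : Oinv sg a 0 b 0 -> Ogoal sg (a * b).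
Proof. rewrite /Oinv /Ogoal; move=> h; prep; subst; rewrite /=; nia. Qed.

Lemma O_stepA sg a ra b rb t : Oinv sg a ra b rb -> (0 < ra)%N ->
  AMG (Oinv sg) (Ogoal sg) (a + sgn t) ra.-1 b rb.
Proof.
rewrite /Oinv /AMG /Ogoal => h hr.
case: (posnP ra.-1) => ?; case: (posnP rb) => ?; prep; solveAMG solveO.
Qed.

Lemma O_stepB sg a ra b rb t : Oinv sg a ra b rb -> (0 < rb)%N ->
  AMG (Oinv sg) (Ogoal sg) a ra (b + sgn t) rb.-1.
Proof.
rewrite /Oinv /AMG /Ogoal => h hr.
case: (posnP ra) => ?; case: (posnP rb.-1) => ?; prep; solveAMG solveO.
Qed.

Lemma W_end sg a b : Winv sg a 0 b 0 -> Wgoal sg (a * b).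
Proof. rewrite /Winv /Wgoal; move=> h; prep; subst; rewrite /=; nia. Qed.

Lemma W_stepA sg a ra b rb t : Winv sg a ra b rb -> (0 < ra)%N ->
  AMG (Winv sg) (Wgoal sg) (a + sgn t) ra.-1 b rb.
Proof.
rewrite /Winv /AMG /Wgoal => h hr.
case: (posnP ra.-1) => ?; case: (posnP rb) => ?; prep; solveAMG solveW.
Qed.

Lemma W_stepB sg a ra b rb t : Winv sg a ra b rb -> (0 < rb)%N ->
  AMG (Winv sg) (Wgoal sg) a ra (b + sgn t) rb.-1.
Proof.
rewrite /Winv /AMG /Wgoal => h hr.
case: (posnP ra) => ?; case: (posnP rb.-1) => ?; prep; solveAMG solveW.
Qed.

Set Implicit Arguments. Unset Strict Implicit.

Section Gen.
Variables (T : finType) (e : rel T).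

Definition unas (s : assignment T) := #|[set v | s v == None]|.
Definition fullb (s : assignment T) := ~~ [exists v, s v == None].

Lemma unas_assign (s : assignment T) v b : s v = None -> unas (assign s v b) = (unas s).-1.
Proof.
move=> sv; rewrite /unas (cardsD1 v [set w | s w == None]) inE sv eqxx /=.
apply: eq_card => w; rewrite !inE ffunE.
by case: (w =P v) => //= ->; rewrite sv.
Qed.

Lemma unas0 (s : assignment T) : unas s = 0%N -> fullb s.
Proof.
move=> h; apply/negP => /existsP [v hv].
suff : (0 < unas s)%N by rewrite h.
by apply/card_gt0P; exists v; rewrite inE.
Qed.

Section Max.
Variables (G : int -> Prop) (Inv : assignment T -> Prop).
Hypothesis Gmin : forall x y, G x -> G y -> G (Num.min x y).
Hypothesis G1 : G 1.
Hypothesis Gmaxl : forall x y, G x -> G (Num.max x y).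
Hypothesis Gmaxr : forall x y, G y -> G (Num.max x y).
Definition MGmax s := (fullb s /\ G (Num.sg (score e s))) \/
   exists w b, s w = None /\ Inv (assign s w b).
Hypothesis Hend : forall s, Inv s -> fullb s -> G (Num.sg (score e s)).
Hypothesis Hstep : forall s v b, Inv s -> s v = None -> MGmax (assign s v b).

Lemma gen_max k : forall s, (unas s <= k)%N ->
  (Inv s -> G (value e k s false)) /\ (MGmax s -> G (value e k s true)).
Proof.
elim: k => [|k IH] s hk.
  have hf : fullb s by apply: unas0; lia.
  split=> [hI|[[_ h]|[w [b [hw _]]]]] //=; first exact: Hend.
  by move: hf; rewrite /fullb; case/negP; apply/existsP; exists w; rewrite hw.
rewrite /=; case: ifP => hex; last first.
  have hf : fullb s by rewrite /fullb hex.
  split=> [hI|[[_ h]|[w [b [hw _]]]]] //=; first exact: Hend.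
  by move: hf; rewrite /fullb; case/negP; apply/existsP; exists w; rewrite hw.
have hk' : forall v b, s v = None -> (unas (assign s v b) <= k)%N.
  move=> v b hv; rewrite unas_assign //; lia.
split.
  move=> hI; apply: (big_ind G) => // v /eqP hv.
  apply: (big_ind G) => // b _.
  exact: (proj2 (IH _ (hk' v b hv)) (Hstep b hI hv)).
case=> [[hf _]|[w [b [hw hI]]]]; first by move: hf; rewrite /fullb hex.
rewrite (bigD1 w) /=; last by rewrite hw.
apply: Gmaxl; rewrite (bigD1 b) //=; apply: Gmaxl.
exact: (proj1 (IH _ (hk' w b hw)) hI).
Qed.
End Max.

Section Min.
Variables (G : int -> Prop) (Inv : assignment T -> Prop).
Hypothesis Gmax : forall x y, G x -> G y -> G (Num.max x y).
Hypothesis Gm1 : G (-1).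
Hypothesis Gminl : forall x y, G x -> G (Num.min x y).
Definition MGmin s := (fullb s /\ G (Num.sg (score e s))) \/
   exists w b, s w = None /\ Inv (assign s w b).
Hypothesis Hend : forall s, Inv s -> fullb s -> G (Num.sg (score e s)).
Hypothesis Hstep : forall s v b, Inv s -> s v = None -> MGmin (assign s v b).

Lemma gen_min k : forall s, (unas s <= k)%N ->
  (Inv s -> G (value e k s true)) /\ (MGmin s -> G (value e k s false)).
Proof.
elim: k => [|k IH] s hk.
  have hf : fullb s by apply: unas0; lia.
  split=> [hI|[[_ h]|[w [b [hw _]]]]] //=; first exact: Hend.
  by move: hf; rewrite /fullb; case/negP; apply/existsP; exists w; rewrite hw.
rewrite /=; case: ifP => hex; last first.
  have hf : fullb s by rewrite /fullb hex.
  split=> [hI|[[_ h]|[w [b [hw _]]]]] //=; first exact: Hend.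
  by move: hf; rewrite /fullb; case/negP; apply/existsP; exists w; rewrite hw.
have hk' : forall v b, s v = None -> (unas (assign s v b) <= k)%N.
  move=> v b hv; rewrite unas_assign //; lia.
split.
  move=> hI; apply: (big_ind G) => // v /eqP hv.
  apply: (big_ind G) => // b _.
  exact: (proj2 (IH _ (hk' v b hv)) (Hstep b hI hv)).
case=> [[hf _]|[w [b [hw hI]]]]; first by move: hf; rewrite /fullb hex.
rewrite (bigD1 w) /=; last by rewrite hw.
apply: Gminl; rewrite (bigD1 b) //=; apply: Gminl.
exact: (proj1 (IH _ (hk' w b hw)) hI).
Qed.
End Min.

Lemma value_bounds k (s : assignment T) t : -1 <= value e k s t <= 1.
Proof.
elim: k s t => [|k IH] s t /=.
  by case: (sgrP (score e s)).
case: ifP => _; last by case: (sgrP (score e s)).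
case: t.
  apply: (big_ind (fun x => -1 <= x <= 1)) => //.
    by move=> x y /andP[a b] /andP[c d]; rewrite le_max a /= ge_max b d.
  move=> v _; apply: (big_ind (fun x => -1 <= x <= 1)) => //.
  by move=> x y /andP[a b] /andP[c d]; rewrite le_max a /= ge_max b d.
apply: (big_ind (fun x => -1 <= x <= 1)) => //.
  by move=> x y /andP[a b] /andP[c d]; rewrite le_min a c /= ge_min b.
move=> v _; apply: (big_ind (fun x => -1 <= x <= 1)) => //.
by move=> x y /andP[a b] /andP[c d]; rewrite le_min a c /= ge_min b.
Qed.
End Gen.

Section K.
Variables m n : nat.
Local Notation T := ('I_m + 'I_n)%type.
Implicit Types s : assignment T.

Definition dA s := \sum_(i < m) spin (s (inl i)).
Definition dB s := \sum_(j < n) spin (s (inr j)).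
Definition rA s := #|[set i : 'I_m | s (inl i) == None]|.
Definition rB s := #|[set j : 'I_n | s (inr j) == None]|.

Lemma edgesK : edges (Kmn_adj m n) =
  (fun p : 'I_m * 'I_n => [set (inl p.1 : T); inr p.2]) @: [set: 'I_m * 'I_n].
Proof.
apply/setP=> E; apply/imset2P/imsetP.
  case=> u v _; rewrite inE /=. case: u => [i|j]; case: v => [i'|j'] //= _ ->.
    by exists (i, j'); rewrite ?in_setT.
  by exists (i', j); rewrite ?in_setT //= setUC.
case=> [[i j] _ ->]; by exists (inl i : T) (inr j : T); rewrite ?inE.
Qed.

Lemma score_K s : score (Kmn_adj m n) s = dA s * dB s.
Proof.
rewrite /score edgesK big_imset /=; last first.
  move=> [i j] [i' j'] _ _ /= /setP h.
  have := h (inl i); have := h (inr j); rewrite !inE /= !eqxx /=.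
  by move=> /esym /eqP [->] /esym /orP [/eqP [->] | ].
rewrite /dA /dB big_distrlr pair_bigA /=; apply: eq_big => [p|[i j] _]; first by rewrite in_setT.
by rewrite big_setU1 ?inE //= big_set1.
Qed.

Lemma dA_l s i b : s (inl i) = None -> dA (assign s (inl i) b) = dA s + spin (Some b).
Proof.
move=> h; rewrite /dA (bigD1 i) //= [in RHS](bigD1 i) //= ffunE eqxx h add0r addrC.
congr (_ + _); apply: eq_bigr => j hj; rewrite ffunE.
by case: eqP => // [[]] /eqP; rewrite (negbTE hj).
Qed.

Lemma dB_r s j b : s (inr j) = None -> dB (assign s (inr j) b) = dB s + spin (Some b).
Proof.
move=> h; rewrite /dB (bigD1 j) //= [in RHS](bigD1 j) //= ffunE eqxx h add0r addrC.
congr (_ + _); apply: eq_bigr => i hi; rewrite ffunE.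
by case: eqP => // [[]] /eqP; rewrite (negbTE hi).
Qed.

Lemma dB_l s i b : dB (assign s (inl i) b) = dB s.
Proof. by apply: eq_bigr => j _; rewrite ffunE. Qed.

Lemma dA_r s j b : dA (assign s (inr j) b) = dA s.
Proof. by apply: eq_bigr => i _; rewrite ffunE. Qed.

Lemma rA_l s i b : s (inl i) = None -> rA (assign s (inl i) b) = (rA s).-1.
Proof.
move=> sv; rewrite /rA (cardsD1 i [set w | s (inl w) == None]) inE sv eqxx /=.
apply: eq_card => w; rewrite !inE ffunE.
by case: (w =P i) => [->|/eqP hw] /=; [rewrite eqxx | rewrite (inj_eq (@inl_inj _ _)) (negbTE hw)].
Qed.

Lemma rB_r s j b : s (inr j) = None -> rB (assign s (inr j) b) = (rB s).-1.
Proof.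
move=> sv; rewrite /rB (cardsD1 j [set w | s (inr w) == None]) inE sv eqxx /=.
apply: eq_card => w; rewrite !inE ffunE.
by case: (w =P j) => [->|/eqP hw] /=; [rewrite eqxx | rewrite (inj_eq (@inr_inj _ _)) (negbTE hw)].
Qed.

Lemma rB_l s i b : rB (assign s (inl i) b) = rB s.
Proof. by apply: eq_card => j; rewrite !inE ffunE. Qed.

Lemma rA_r s j b : rA (assign s (inr j) b) = rA s.
Proof. by apply: eq_card => i; rewrite !inE ffunE. Qed.

Lemma rA_pos s i : s (inl i) = None -> (0 < rA s)%N.
Proof. by move=> h; apply/card_gt0P; exists i; rewrite inE h. Qed.

Lemma rB_pos s j : s (inr j) = None -> (0 < rB s)%N.
Proof. by move=> h; apply/card_gt0P; exists j; rewrite inE h. Qed.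

Lemma rA_ex s : (0 < rA s)%N -> exists i, s (inl i) = None.
Proof. by case/card_gt0P=> i; rewrite inE => /eqP; exists i. Qed.

Lemma rB_ex s : (0 < rB s)%N -> exists j, s (inr j) = None.
Proof. by case/card_gt0P=> j; rewrite inE => /eqP; exists j. Qed.

Lemma full_r0 s : ~~ [exists v, s v == None] -> rA s = 0%N /\ rB s = 0%N.
Proof.
move=> h; split; apply/eqP; rewrite eqn0Ngt; apply/negP.
  by case/rA_ex=> i hi; move/negP: h; apply; apply/existsP; exists (inl i); rewrite hi.
by case/rB_ex=> i hi; move/negP: h; apply; apply/existsP; exists (inr i); rewrite hi.
Qed.

Lemma r0_full s : rA s = 0%N -> rB s = 0%N -> ~~ [exists v, s v == None].
Proof.
move=> ha hb; apply/negP=> /existsP [[i|j] /eqP h].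
  by have := rA_pos h; rewrite ha.
by have := rB_pos h; rewrite hb.
Qed.

Lemma empty_vals : dA (empty_assignment T) = 0 /\ rA (empty_assignment T) = m /\
  dB (empty_assignment T) = 0 /\ rB (empty_assignment T) = n.
Proof.
rewrite /dA /dB /rA /rB; split; first by apply: big1 => i _; rewrite ffunE.
split; first by rewrite -[RHS](card_ord m); apply: eq_card => i; rewrite !inE ffunE.
split; first by apply: big1 => i _; rewrite ffunE.
by rewrite -[RHS](card_ord n); apply: eq_card => i; rewrite !inE ffunE.
Qed.
End K.

Unset Implicit Arguments.

Section Bridge.
Variables (m n : nat).
Local Notation T := ('I_m + 'I_n)%type.
Local Notation e := (Kmn_adj m n).
Variables (P : int -> nat -> int -> nat -> Prop) (goal : int -> Prop) (G : int -> Prop).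
Hypothesis Hgoal : forall x, goal x -> G (Num.sg x).
Hypothesis Pend : forall a b, P a 0 b 0 -> goal (a * b).
Hypothesis PstepA : forall a ra b rb t, P a ra b rb -> (0 < ra)%N ->
  AMG P goal (a + sgn t) ra.-1 b rb.
Hypothesis PstepB : forall a ra b rb t, P a ra b rb -> (0 < rb)%N ->
  AMG P goal a ra (b + sgn t) rb.-1.

Definition KInv (s : assignment T) := P (dA s) (rA s) (dB s) (rB s).

Lemma bridge_MG (s : assignment T) : AMG P goal (dA s) (rA s) (dB s) (rB s) ->
  (fullb s /\ G (Num.sg (score e s))) \/
  exists w b, s w = None /\ KInv (assign s w b).
Proof.
case=> [[ha [hb hg]] | [[hp [t ht]] | [hp [t ht]]]].
- left; split; first exact: r0_full.
  by rewrite score_K; apply: Hgoal.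
- right; case: (rA_ex hp) => i hi; exists (inl i), t; split => //.
  by rewrite /KInv dA_l // rA_l // dB_l rB_l.
- right; case: (rB_ex hp) => j hj; exists (inr j), t; split => //.
  by rewrite /KInv dB_r // rB_r // dA_r rA_r.
Qed.

Lemma bridge_end (s : assignment T) : KInv s -> fullb s -> G (Num.sg (score e s)).
Proof.
move=> hI /full_r0 [ha hb]; rewrite score_K; apply: Hgoal; apply: Pend.
by move: hI; rewrite /KInv ha hb.
Qed.

Lemma bridge_step (s : assignment T) v b : KInv s -> s v = None ->
  (fullb (assign s v b) /\ G (Num.sg (score e (assign s v b)))) \/
  exists w b', assign s v b w = None /\ KInv (assign (assign s v b) w b').
Proof.
move=> hI; case: v => [i|j] h; apply: bridge_MG.
  rewrite dA_l // rA_l // dB_l rB_l; exact: (PstepA _ _ _ _ _ hI (rA_pos h)).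
rewrite dB_r // rB_r // dA_r rA_r; exact: (PstepB _ _ _ _ _ hI (rB_pos h)).
Qed.
End Bridge.

Lemma strat_max m n (P : int -> nat -> int -> nat -> Prop) (goal : int -> Prop) (c : int) :
  c <= 1 -> (forall x, goal x -> c <= Num.sg x) ->
  (forall a b, P a 0 b 0 -> goal (a * b)) ->
  (forall a ra b rb t, P a ra b rb -> (0 < ra)%N -> AMG P goal (a + sgn t) ra.-1 b rb) ->
  (forall a ra b rb t, P a ra b rb -> (0 < rb)%N -> AMG P goal a ra (b + sgn t) rb.-1) ->
  forall k (s : assignment ('I_m + 'I_n)%type), (unas s <= k)%N ->
  (KInv m n P s -> c <= value (Kmn_adj m n) k s false) /\
  (AMG P goal (dA s) (rA s) (dB s) (rB s) -> c <= value (Kmn_adj m n) k s true).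
Proof.
move=> hc hg pe pa pb k s hk.
have [h1 h2] := @gen_max _ (Kmn_adj m n) (fun x => c <= x) (KInv m n P)
  (fun x y hx hy => ltac:(by rewrite /= le_min hx hy)) hc
  (fun x y hx => ltac:(by rewrite /= le_max hx))
  (@bridge_end m n P goal (fun x => c <= x) hg pe)
  (@bridge_step m n P goal (fun x => c <= x) hg pa pb) k s hk.
split=> // hA; apply: h2; exact: (@bridge_MG m n P goal _ hg s hA).
Qed.

Lemma strat_min m n (P : int -> nat -> int -> nat -> Prop) (goal : int -> Prop) (c : int) :
  -1 <= c -> (forall x, goal x -> Num.sg x <= c) ->
  (forall a b, P a 0 b 0 -> goal (a * b)) ->
  (forall a ra b rb t, P a ra b rb -> (0 < ra)%N -> AMG P goal (a + sgn t) ra.-1 b rb) ->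
  (forall a ra b rb t, P a ra b rb -> (0 < rb)%N -> AMG P goal a ra (b + sgn t) rb.-1) ->
  forall k (s : assignment ('I_m + 'I_n)%type), (unas s <= k)%N ->
  (KInv m n P s -> value (Kmn_adj m n) k s true <= c) /\
  (AMG P goal (dA s) (rA s) (dB s) (rB s) -> value (Kmn_adj m n) k s false <= c).
Proof.
move=> hc hg pe pa pb k s hk.
have [h1 h2] := @gen_min _ (Kmn_adj m n) (fun x => x <= c) (KInv m n P)
  (fun x y hx hy => ltac:(by rewrite /= ge_max hx hy)) hc
  (fun x y hx => ltac:(by rewrite /= ge_min hx))
  (@bridge_end m n P goal (fun x => x <= c) hg pe)
  (@bridge_step m n P goal (fun x => x <= c) hg pa pb) k s hk.
split=> // hA; apply: h2; exact: (@bridge_MG m n P goal _ hg s hA).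
Qed.

Lemma W_init sg m n : (0 < m)%N -> (0 < n)%N -> (m %% 2 = 0 \/ n %% 2 = 0)%N ->
  AMG (Winv sg) (Wgoal sg) 0 m 0 n.
Proof.
rewrite /Winv /AMG /Wgoal => hm hn h.
have hm2 := modn2 m; have hn2 := modn2 n.
case: (odd m) hm2 => hm2; case: (odd n) hn2 => hn2;
case: (posnP m.-1) => ?; case: (posnP n.-1) => ?; case: sg; rewrite /sgn;
  solveAMG solveW.
Qed.


Theorem theorem4 (m n : nat) (P_first : bool) :
  (0 < m)%N -> (0 < n)%N ->
  sign_game_outcome (Kmn_adj m n) P_first =
    (if odd m && odd n then (if P_first then -1 else 1) else 0).
Proof.
move=> hm hn; rewrite /sign_game_outcome.
set s0 := empty_assignment _.
set K := (X in value _ X).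
have hk : (unas s0 <= K)%N by exact: max_card.
have [e1 [e2 [e3 e4]]] := @empty_vals m n.
have hb := value_bounds (Kmn_adj m n) K s0 P_first.
have hm2 := modn2 m; have hn2 := modn2 n.
case: (odd m) hm2 => hm2; case: (odd n) hn2 => hn2 /=.
- case: P_first hb => hb; apply/eqP; rewrite eq_le; apply/andP; split.
  + have [h _] := @strat_min m n (Oinv false) (Ogoal false) (-1) (lexx _)
      (fun x hx => ltac:(by rewrite /Ogoal in hx; rewrite hx))
      (@O_end false) (@O_stepA false) (@O_stepB false) _ s0 hk.
    by apply: h; rewrite /KInv e1 e2 e3 e4 /Oinv; left; lia.
  + by case/andP: hb.
  + by case/andP: hb.
  + have [h _] := @strat_max m n (Oinv true) (Ogoal true) 1 (lexx _)
      (fun x hx => ltac:(by rewrite /Ogoal in hx; rewrite hx))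
      (@O_end true) (@O_stepA true) (@O_stepB true) _ s0 hk.
    by apply: h; rewrite /KInv e1 e2 e3 e4 /Oinv; left; lia.
all: have hpar : (m %% 2 = 0 \/ n %% 2 = 0)%N by lia.
all: have hW0 : forall sg, Winv sg 0 m 0 n by move=> sg; rewrite /Winv; right; lia.
all: have gmax : forall x, Wgoal true x -> 0 <= Num.sg x
       by move=> x; rewrite /Wgoal /sgn mul1r sgr_ge0.
all: have gmin : forall x, Wgoal false x -> Num.sg x <= 0
       by move=> x; rewrite /Wgoal /sgn mulN1r oppr_ge0 sgr_le0.
all: have [hmax1 hmax2] := @strat_max m n (Winv true) (Wgoal true) 0 ler01 gmax
      (@W_end true) (@W_stepA true) (@W_stepB true) _ s0 hk.
all: have [hmin1 hmin2] := @strat_min m n (Winv false) (Wgoal false) 0 ltac:(by []) gmin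
      (@W_end false) (@W_stepA false) (@W_stepB false) _ s0 hk.
all: case: P_first {hb}; apply/eqP; rewrite eq_le; apply/andP; split.
all: first [ apply: hmin1 | apply: hmin2 | apply: hmax1 | apply: hmax2 ].
all: rewrite /KInv ?e1 ?e2 ?e3 ?e4; first [ exact: hW0 | exact: W_init ].
Qed.
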